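(* Let $X$ be an infinite discrete space and $G$ a subgroup of $\mathrm S(X)$ with the permutation topology $\tau_\partial$, and suppose the action of $G$ on $X$ is ultratransitive. Then: (1) the maximal equiuniformity $\mathcal U_X$ is totally bounded; (2) the completion of $X$ with respect to $\mathcal U_X$ is the one-point Alexandroff compactification $\alpha X$; (3) $L\wedge R=\mathcal U$; (4) $G$ is Roelcke precompact; (5) the Roelcke compactification of $G$ is the enveloping Ellis semigroup, i.e. the closure of $\jmath(G)$ in $(\alpha X)^{\alpha X}$, and coincides with the Roelcke compactification of $(\mathrm S(X),\tau_\partial)$.
   Context: The action is ultratransitive if for every $n$ and any two $n$-tuples of distinct points $x_1,\dots,x_n$ and $y_1,\dots,y_n$ there is $g\in G$ with $g(x_k)=y_k$. $\tau_\partial$: identity neighbourhood base the pointwise stabilizers $\mathrm{St}_{x_1,\dots,x_n}$. $\mathcal U_X$: uniformity on $X$ with base the partitions $\{\mathrm{St}_{x_1,\dots,x_n}x\mid x\in X\}$. $\mathcal U$: the uniformity on $G$ with base the coverings $\{\{h\in G\mid (g(x_k),h(x_k))\in\mathrm U,\ k=1,\dots,n\}\mid g\in G\}$, $x_1,\dots,x_n\in X$, $\mathrm U$ an entourage of $\mathcal U_X$. $L\wedge R$: the Roelcke uniformity (greatest lower bound of left and right uniformities); Roelcke precompact means it is totally bounded; the Roelcke compactification is the completion with respect to it. $\jmath(g)=(g(x))_{x\in\alpha X}$, where $g$ is extended to $\alpha X$ fixing the point at infinity. *)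

(* Defs.v *)
From HB Require Import structures.
From mathcomp Require Import all_boot all_order all_algebra.
From mathcomp Require Import all_classical all_reals.
From mathcomp Require Import topology function_spaces one_point_compactification.

Set Implicit Arguments.
Unset Strict Implicit.
Unset Printing Implicit Defensive.

Local Open Scope classical_set_scope.
Local Open Scope relation_scope.

Notation alphaX X := (one_point_compactification (discrete_topology X)).

Definition Sym (X : Type) : set (X -> X) := [set g | bijective g].
Arguments Sym X : clear implicits.

Definition is_perm_subgroup (X : Type) (G : set (X -> X)) : Prop :=
  [/\ G `<=` Sym X, G (@id X),
      (forall g h, G g -> G h -> G (g \o h)) &
      (forall g, G g -> exists2 h, G h & cancel g h /\ cancel h g)].

Definition ultratransitive (X : eqType) (G : set (X -> X)) : Prop :=
  forall xs ys : seq X, size xs = size ys -> uniq xs -> uniq ys ->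
    exists2 g, G g & map g xs = ys.

Definition elt (X : Type) (G : set (X -> X)) := {g : X -> X | G g}.

(** Pointwise stabilizer St_{x_1,...,x_n} in G (identity nbhd base of tau_d). *)
Definition stab (X : eqType) (G : set (X -> X)) (xs : seq X) : set (elt G) :=
  [set g | forall x, x \in xs -> proj1_sig g x = x].
Arguments stab {X} G xs.

Definition stab_orbit (X : eqType) (G : set (X -> X)) (xs : seq X) (z : X)
  : set X := [set y | exists2 g, stab G xs g & proj1_sig g z = y].
Arguments stab_orbit {X} G xs z.

(** Uniformities are given by their filters of entourages.
    The entourage associated with a covering C is the union of A x A, A in C. *)

(** U_X : base = the partitions {St_{xs} z | z in X}. *)
Definition UX (X : eqType) (G : set (X -> X)) : set_system (X * X) :=
  [set E | exists xs : seq X,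
     [set p | exists z, stab_orbit G xs z p.1 /\ stab_orbit G xs z p.2] `<=` E].
Arguments UX {X} G.

Definition leftU (X : eqType) (G : set (X -> X)) : set_system (elt G * elt G) :=
  [set E | exists xs : seq X,
     [set p : elt G * elt G | exists2 v, stab G xs v &
        proj1_sig p.2 = proj1_sig p.1 \o proj1_sig v] `<=` E].
Arguments leftU {X} G.

Definition rightU (X : eqType) (G : set (X -> X)) : set_system (elt G * elt G) :=
  [set E | exists xs : seq X,
     [set p : elt G * elt G | exists2 v, stab G xs v &
        proj1_sig p.2 = proj1_sig v \o proj1_sig p.1] `<=` E].
Arguments rightU {X} G.

(** The uniformity U on G: base the coverings
    { {h | (g x_k, h x_k) in U for all k} | g in G },
    xs = (x_1,...,x_n), U an entourage of U_X. *)
Definition Ucov (X : eqType) (G : set (X -> X)) : set_system (elt G * elt G) :=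
  [set E | exists (xs : seq X) (U : set (X * X)), UX G U /\
     [set p : elt G * elt G | exists g : elt G, forall x, x \in xs ->
        U (proj1_sig g x, proj1_sig p.1 x) /\
        U (proj1_sig g x, proj1_sig p.2 x)] `<=` E].
Arguments Ucov {X} G.

Definition is_uniformity (T : Type) (U : set_system (T * T)) : Prop :=
  [/\ Filter U, (forall E, U E -> diagonal `<=` E),
      (forall E, U E -> U E^-1) &
      (forall E, U E -> exists2 D, U D & D \; D `<=` E)].

Definition is_glb (T : Type) (W L R : set_system (T * T)) : Prop :=
  [/\ is_uniformity W, W `<=` L, W `<=` R &
      forall W', is_uniformity W' -> W' `<=` L -> W' `<=` R -> W' `<=` W].

Definition totally_bounded_unif (T : Type) (U : set_system (T * T)) : Prop :=
  forall E, U E -> exists2 F : set T, finite_set F & forall x, exists2 y, F y & E (y, x).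

Definition roelcke_precompact (X : eqType) (G : set (X -> X)) : Prop :=
  exists W, is_glb W (leftU G) (rightU G) /\ totally_bounded_unif W.

(** The unique uniformity of a compact Hausdorff space: the
    neighbourhoods of the diagonal. *)
Definition diag_nbhs (Y : topologicalType) : set_system (Y * Y) :=
  [set D | forall y : Y, nbhs (y, y) D].
Arguments diag_nbhs Y : clear implicits.

(** (K, e) is the completion of (T, UT), where K is a subspace of a compact
    Hausdorff space Y carrying its unique (hence complete) uniformity:
    K is the closure of e(T) (so e has dense image in K and K is compact),
    and e is a uniform embedding, i.e. UT is the uniformity induced by e. *)
Definition is_compact_completion (T : Type) (UT : set_system (T * T))
    (Y : topologicalType) (K : set Y) (e : T -> Y) : Prop :=
  [/\ hausdorff_space Y, compact [set: Y], K = closure (range e) &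
      UT = [set E | exists2 D, diag_nbhs Y D &
                    [set p | D (e p.1, e p.2)] `<=` E]].

(** j(g) = (g(x))_{x in alpha X}, g extended to alpha X fixing infinity. *)
Definition jmap (X : choiceType) (G : set (X -> X)) (g : elt G)
  : {ptws alphaX X -> alphaX X} :=
  fun a : alphaX X => omap (proj1_sig g) a.
Arguments jmap {X} G g.

(* Main.v *)
From HB Require Import structures.
Require Import Defs.
From mathcomp Require Import all_boot all_order all_algebra.
From mathcomp Require Import all_classical all_reals.
From mathcomp Require Import topology function_spaces one_point_compactification.

Set Implicit Arguments.
Unset Strict Implicit.
Unset Printing Implicit Defensive.
Local Open Scope classical_set_scope.
Local Open Scope relation_scope.

Definition relB (X : eqType) (B : seq X) : set (X * X) :=
  [set p | p.1 = p.2 \/ (p.1 \notin B /\ p.2 \notin B)].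
Lemma perm_inj (X : Type) (G : set (X -> X)) : is_perm_subgroup G ->
  forall g, G g -> injective g.
Proof. by case=> sub _ _ _ g /sub/bij_inj. Qed.
Lemma map_fix (X : eqType) (g : X -> X) (s : seq X) : map g s = s -> {in s, forall x, g x = x}.
Proof. by move=> h; apply/eq_in_map; rewrite map_id. Qed.

Definition eid (X : Type) (G : set (X -> X)) (HG : is_perm_subgroup G) : elt G :=
  exist _ id (let: And4 _ h _ _ := HG in h).

Lemma stab_in (X : eqType) (G : set (X -> X)) (HG : is_perm_subgroup G) B (s : elt G) z :
  stab G B s -> proj1_sig s z \in B -> proj1_sig s z = z.
Proof.
move=> Ss zB; have sa := Ss _ zB.
by apply: (perm_inj HG (proj2_sig s)); rewrite sa.
Qed.

Lemma stab_out (X : eqType) (G : set (X -> X)) (HG : is_perm_subgroup G) B (s : elt G) z :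
  stab G B s -> z \notin B -> proj1_sig s z \notin B.
Proof.
move=> Ss zB; apply/negP => /[dup] /(stab_in HG Ss) e; by rewrite e (negbTE zB).
Qed.

Lemma relB_Rel (X : eqType) (G : set (X -> X)) (HG : is_perm_subgroup G)
  (HU : ultratransitive G) (B : seq X) :
  [set p | exists z, stab_orbit G B z p.1 /\ stab_orbit G B z p.2] = relB B.
Proof.
apply/seteqP; split => -[a b] /=.
- move=> [z [[s Ss <-] [t St <-]]].
  have [zB|zB] := boolP (z \in B).
    by left; rewrite /= (Ss _ zB) (St _ zB).
  by right; rewrite !(stab_out HG) .
- case=> [/= <-|[/= aB bB]].
    exists a; split; exists (eid HG) => //.
  have [g Gg] := HU (rcons (undup B) a) (rcons (undup B) b)
    ltac:(by rewrite !size_rcons)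
    ltac:(by rewrite rcons_uniq mem_undup aB undup_uniq)
    ltac:(by rewrite rcons_uniq mem_undup bB undup_uniq).
  rewrite map_rcons => /rcons_inj [/map_fix hB ga].
  exists a; split; first by exists (eid HG).
  by exists (exist _ g Gg) => // x xB /=; apply: hB; rewrite mem_undup.
Qed.


Lemma relB_refl (X : eqType) (B : seq X) a : relB B (a, a).
Proof. by left. Qed.
Lemma relB_sym (X : eqType) (B : seq X) a b : relB B (a, b) -> relB B (b, a).
Proof. by case=> [/= ->|[]]; [left|right]. Qed.
Lemma relB_trans (X : eqType) (B : seq X) a b c :
  relB B (a, b) -> relB B (b, c) -> relB B (a, c).
Proof.
case=> [/= ->//|[/= aB bB]]; case=> [/= <-|[/= _ cB]]; by right.
Qed.
Lemma relB_catl (X : eqType) (B1 B2 : seq X) a b :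
  relB (B1 ++ B2) (a, b) -> relB B1 (a, b).
Proof. case=> [/= ->|[/=]]; first by left. by rewrite !mem_cat !negb_or => /andP[? _] /andP[? _]; right. Qed.
Lemma relB_catr (X : eqType) (B1 B2 : seq X) a b :
  relB (B1 ++ B2) (a, b) -> relB B2 (a, b).
Proof. case=> [/= ->|[/=]]; first by left. by rewrite !mem_cat !negb_or => /andP[_ ?] /andP[_ ?]; right. Qed.

Definition Tset (X : eqType) (G : set (X -> X)) (A B : seq X) : set (elt G * elt G) :=
  [set p | forall x, x \in A -> relB B (proj1_sig p.1 x, proj1_sig p.2 x)].
Arguments Tset {X} G A B.
Definition Tf (X : eqType) (G : set (X -> X)) : set_system (elt G * elt G) :=
  [set E | exists A B, Tset G A B `<=` E].
Arguments Tf {X} G.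

Lemma UX_E (X : eqType) (G : set (X -> X)) (HG : is_perm_subgroup G)
  (HU : ultratransitive G) : UX G = [set E | exists B, relB B `<=` E].
Proof.
by apply/seteqP; split => E [B h]; exists B; rewrite ?(relB_Rel HG HU) // -(relB_Rel HG HU).
Qed.

Lemma Ucov_E (X : eqType) (G : set (X -> X)) (HG : is_perm_subgroup G)
  (HU : ultratransitive G) : Ucov G = Tf G.
Proof.
apply/seteqP; split => E.
- case=> A [U [+ sub]]; rewrite (UX_E HG HU) => -[B hB].
  exists A, B => -[p q] hpq; apply: sub; exists p => x xA; split; apply: hB.
    exact: relB_refl.
  exact: hpq.
- case=> A [B sub]; exists A, (relB B); split.
    by rewrite (UX_E HG HU); exists B.
  move=> [p q] [k hk]; apply: sub => x xA.
  have [h1 h2] := hk x xA.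
  exact: relB_trans (relB_sym h1) h2.
Qed.

Lemma Tf_unif (X : eqType) (G : set (X -> X)) : is_uniformity (Tf G).
Proof.
split.
- constructor.
  + by exists [::], [::].
  + move=> P Q [A1 [B1 h1]] [A2 [B2 h2]]; exists (A1 ++ A2), (B1 ++ B2).
    move=> p hp; split; [apply: h1|apply: h2] => x xA.
      by apply: relB_catl; apply: hp; rewrite mem_cat xA.
    by apply: relB_catr; apply: hp; rewrite mem_cat xA orbT.
  + by move=> P Q PQ [A [B h]]; exists A, B; apply: subset_trans PQ.
- move=> E [A [B h]] [p q] /diagonalP /= <-; apply: h => x _; apply: relB_refl.
- move=> E [A [B h]]; exists A, B => -[p q] hpq; apply: h => x xA.
  exact/relB_sym/hpq.
- move=> E [A [B h]]; exists (Tset G A B).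
    exists A; exists B. done.
  move=> [p r] [q hpq hqr]; apply: h => x xA.
  exact: relB_trans (hpq x xA) (hqr x xA).
Qed.


Lemma Tf_glb (X : eqType) (G : set (X -> X)) (HG : is_perm_subgroup G)
  (HU : ultratransitive G) : is_glb (Tf G) (leftU G) (rightU G).
Proof.
have [_ Gid Gcomp Ginv] := HG.
split.
- exact: Tf_unif.
- move=> E [A [B h]]; exists A => -[p q] /= [w Sw e]; apply: h => x xA /=; rewrite e /=.
  by rewrite (Sw x xA); apply: relB_refl.
- move=> E [A [B h]]; exists B => -[p q] /= [v Sv e]; apply: h => x xA /=; rewrite e /=.
  have [pB|pB] := boolP (proj1_sig p x \in B).
    by rewrite (Sv _ pB); apply: relB_refl.
  by right; split => //; apply: (stab_out HG Sv).
move=> W [FW _ _ Wsplit] WL WR E WE.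
have [D WD DE] := Wsplit E WE.
have [A hA] := WL D WD.
have [B hB] := WR D WD.
exists A, B => -[g h] /= Tgh.
apply: DE.
pose A' := undup [seq x <- A | proj1_sig h x \notin B].
have hinj := perm_inj HG (proj2_sig h).
have ginj := perm_inj HG (proj2_sig g).
have A'P x : x \in A' -> x \in A /\ proj1_sig h x \notin B.
  by rewrite mem_undup mem_filter => /andP[].
have gA'B x : x \in A' -> proj1_sig g x \notin B.
  move=> /A'P [xA hxB]; case: (Tgh x xA) => [/= ->//|[]//].
have [u Gu] := HU (undup B ++ map (proj1_sig h) A') (undup B ++ map (proj1_sig g) A')
    ltac:(by rewrite !size_cat !size_map)
    ltac:(rewrite cat_uniq undup_uniq (map_inj_uniq hinj) undup_uniq /= andbT;
          apply/hasPn => y /mapP [x /A'P [_ hxB] ->]; by rewrite mem_undup)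
    ltac:(rewrite cat_uniq undup_uniq (map_inj_uniq ginj) undup_uniq /= andbT;
          apply/hasPn => y /mapP [x /gA'B gxB ->]; by rewrite mem_undup).
rewrite map_cat => /eqP; rewrite eqseq_cat ?size_map // => /andP[/eqP uB /eqP uA].
have uBx b : b \in B -> u b = b by move=> bB; apply: (map_fix uB); rewrite mem_undup.
have uhg x : x \in A -> u (proj1_sig h x) = proj1_sig g x.
  move=> xA; have [hB'|hB'] := boolP (proj1_sig h x \in B).
    rewrite uBx //; case: (Tgh x xA) => [/= ->//|[/= _]]; by rewrite hB'.
  have xA' : x \in A' by rewrite mem_undup mem_filter hB' xA.
  by move: uA; rewrite -map_comp => /eq_in_map /(_ x xA').
have [v Gv [uv vu]] := Ginv u Gu.
have [gi Ggi [ggi gig]] := Ginv _ (proj2_sig g).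
pose m : elt G := exist _ (v \o proj1_sig g) (Gcomp _ _ Gv (proj2_sig g)).
pose w : elt G := exist _ (gi \o (u \o proj1_sig h))
   (Gcomp _ _ Ggi (Gcomp _ _ Gu (proj2_sig h))).
exists m.
  apply: hB; exists (exist _ v Gv) => //= b bB.
  by have := uv b; rewrite uBx.
apply: hA; exists w => /=.
  by move=> x xA /=; rewrite uhg // ggi.
by apply/funext => y /=; rewrite gig uv.
Qed.


Lemma exists_notin (X : eqType) (Xinf : infinite_set [set: X]) (B : seq X) :
  exists y, y \notin B.
Proof.
have [//|nex] := pselect (exists y, y \notin B).
exfalso; apply: Xinf.
have sub : [set: X] `<=` [set` B].
  by move=> y _ /=; have [//|yB] := boolP (y \in B); case: nex; exists y.
exact: (sub_finite_set sub (finite_seq B)).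
Qed.

Lemma UX_tb (X : eqType) (G : set (X -> X)) (HG : is_perm_subgroup G)
  (HU : ultratransitive G) (Xinf : infinite_set [set: X]) :
  totally_bounded_unif (UX G).
Proof.
rewrite (UX_E HG HU) => E [B hB].
have [y0 y0B] := exists_notin Xinf B.
exists ([set` B] `|` [set y0]).
  by rewrite finite_setU; split; [exact: finite_seq|exact: finite_set1].
move=> x; have [xB|xB] := boolP (x \in B).
  by exists x; [left|apply: hB; left].
by exists y0; [right|apply: hB; right].
Qed.

Lemma Tf_tb (X : eqType) (G : set (X -> X)) (HG : is_perm_subgroup G) :
  totally_bounded_unif (Tf G).
Proof.
move=> E [A [B hB]].
pose B' := undup B; pose n := size B'.
pose pat (h : elt G) : (size A).-tuple 'I_n.+1 :=
  map_tuple (fun x => inord (index (proj1_sig h x) B')) (in_tuple A).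
pose rep (t : (size A).-tuple 'I_n.+1) : elt G :=
  match pselect (exists g, pat g = t) with
  | left e => proj1_sig (cid e)
  | right _ => eid HG end.
have repP h : pat (rep (pat h)) = pat h.
  rewrite /rep; case: pselect => [e|]; last by case; exists h.
  exact: (proj2_sig (cid e)).
exists (rep @` setT); first exact/finite_image/finite_finset.
move=> h; exists (rep (pat h)); first by exists (pat h).
apply: hB => x xA /=.
move: (repP h) => /(congr1 val) /= /eq_in_map /(_ x xA).
set y := rep (pat h).
move=> /(congr1 (@nat_of_ord _)); rewrite !inordK; first last.
- by rewrite ltnS index_size.
- by rewrite ltnS index_size.
move=> e.
have [hB'|hB'] := boolP (proj1_sig h x \in B').
  left => /=; rewrite -(nth_index x hB') -e nth_index //.
  by rewrite -index_mem e index_mem.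
right; split; rewrite -mem_undup -/B'.
  by rewrite -index_mem e index_mem.
by [].
Qed.


Lemma discrete_compact_finite (X : choiceType) (C : set (discrete_topology X)) :
  compact C -> finite_set C.
Proof.
move=> cC; apply: contrapT => Cinf.
pose F : set_system (discrete_topology X) := [set S | finite_set (C `\` S)].
have FF : Filter F.
  constructor.
  - by rewrite /F /= setDT; exact: finite_set0.
  - by move=> P Q FP FQ; rewrite /F /= setDIr finite_setU.
  - move=> P Q PQ FP; have sub : C `\` Q `<=` C `\` P.
      by move=> x [Cx nQx]; split => // /PQ.
    exact: (sub_finite_set sub FP).
have PF : ProperFilter F.
  by constructor => //; rewrite /F /= setD0.
have [p [Cp clp]] := cC F PF ltac:(by rewrite /F /= setDv; exact: finite_set0).
have FS : F (C `\` [set p]).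
  have sub : C `\` (C `\` [set p]) `<=` [set p].
    by move=> x [Cx] /= h; apply: contrapT => xp; apply: h.
  exact: (sub_finite_set sub (finite_set1 p)).
have [x [[_ /= xp] /= px]] := clp _ _ FS (discrete_set1 p).
by apply: xp; rewrite px.
Qed.

Definition VN (X : eqType) (K : seq X) : set (option X) :=
  fun r => if r is Some v then v \notin K else True.

Lemma nbhs_NoneE (X : choiceType) (W : set (alphaX X)) :
  nbhs (None : alphaX X) W -> exists K : seq X, VN K `<=` W.
Proof.
move=> h0; have : @one_point_nbhs (discrete_topology X) None W := h0.
case=> C [cC _] sub.
have /finite_seqP [K CK] := discrete_compact_finite cC.
exists K => -[v|] /= h; apply: sub; last by right.
by left; exists v => //; rewrite CK /= (negbTE h).
Qed.

Lemma nbhs_VN (X : choiceType) (K : seq X) : nbhs (None : alphaX X) (VN K).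
Proof.
suff h : @one_point_nbhs (discrete_topology X) None (VN K) by exact: h.
rewrite /one_point_nbhs /filter_from /=; exists ([set` K] : set (discrete_topology X)); first split.
  exact/finite_compact/finite_seq.
  exact: discrete_closed.
move=> [v|] //= [[w /= wK [<-]]|//]; by apply/negP.
Qed.

Lemma nbhs_Some1 (X : choiceType) (u : X) : nbhs (Some u : alphaX X) [set Some u].
Proof.
have := @one_point_compactification_some_nbhs (discrete_topology X) u [set u] (@discrete_set1 (discrete_topology X) u).
by rewrite image_set1.
Qed.

Lemma alphaX_hausdorff (X : choiceType) : hausdorff_space (alphaX X).
Proof.
move=> p q cl.
have key (A B : set (alphaX X)) : nbhs p A -> nbhs q B -> A `&` B !=set0.
  by move=> pA qB; apply: cl.
clear cl; case: p q key => [a|] [b|] key //.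
- have [//|/negbTE ab] := eqVneq a b; first by move=> ->.
  have [r [/= -> [/= ]]] := key _ _ (@nbhs_Some1 X a) (@nbhs_Some1 X b).
  by move=> [] /eqP; rewrite ab.
- have [r [/= e]] := key _ _ (@nbhs_Some1 X a) (@nbhs_VN X [:: a]).
  by rewrite e /VN inE eqxx.
- have [r [/= + e]] := key _ _ (@nbhs_VN X [:: b]) (@nbhs_Some1 X b).
  by rewrite e /VN inE eqxx.
Qed.

Definition Vf (X : eqType) (o : option X) (K : seq X) : set (option X) :=
  if o is Some u then [set Some u] else VN K.

Lemma Vf_open (X : choiceType) (o : option X) (K : seq X) : @open (alphaX X) (Vf o K).
Proof.
rewrite openE => r Vr; rewrite /interior.
case: o Vr => [u /= ->|/=]; first exact: nbhs_Some1.
case: r => [v /= vK|_]; last exact: nbhs_VN.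
apply: (@filterS _ _ (@nbhs_filter (alphaX X) (Some v)) [set Some v]); last exact: (@nbhs_Some1 X v).
by move=> _ ->.
Qed.


Notation Y X := {ptws alphaX X -> alphaX X}.

Definition basic (X : choiceType) (A : seq (alphaX X)) (W : alphaX X -> set (alphaX X)) : set (Y X) :=
  [set f | forall a, a \in A -> W a (f a)].

Lemma basic_nbhs (X : choiceType) (y : Y X) A W :
  (forall a, a \in A -> nbhs (y a) (W a)) -> nbhs y (basic A W).
Proof.
elim: A => [|a A IH] h.
  have -> : basic [::] W = setT by apply/seteqP; split => f.
  exact: (@filterT _ _ (@nbhs_filter (Y X) y)).
have -> : basic (a :: A) W = (fun f : Y X => f a) @^-1` (W a) `&` basic A W.
  apply/seteqP; split => f /=.
    by move=> hf; split; [apply: hf; rewrite inE eqxx|move=> b bA; apply: hf; rewrite inE bA orbT].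
  by move=> [hfa hf] b; rewrite inE => /orP[/eqP ->//|/hf].
have h1 : nbhs (y a) (W a) by apply: h; rewrite inE eqxx.
have h2 : nbhs y (basic A W) by apply: IH => b bA; apply: h; rewrite inE bA orbT.
apply: (@filterI _ _ (@nbhs_filter (Y X) y)) => //.
exact: (@proj_continuous (alphaX X) (fun _ => alphaX X) a y (W a)).
Qed.

Lemma nbhs_basic (X : choiceType) (y : Y X) N : nbhs y N ->
  exists A W, (forall a, nbhs (y a) (W a)) /\ basic A W `<=` N.
Proof.
pose Fb := filter_from [set p : seq (alphaX X) * (alphaX X -> set (alphaX X)) |
   forall a, nbhs (y a) (p.2 a)] (fun p => basic p.1 p.2).
have FFb : Filter Fb.
  apply: filter_from_filter.
    by exists ([::], fun _ => setT) => a /=; exact: filterT.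
  move=> i j hi hj; exists (i.1 ++ j.1, fun a => i.2 a `&` j.2 a).
    by move=> a /=; apply: filterI.
  by move=> f /= hf; split => a ha; have [] := hf a; rewrite //= mem_cat ha ?orbT.
have : Fb --> (y : Y X).
  apply/(@cvg_sup _ _ _ Fb y FFb) => i.
  apply/cvg_image => //.
    by apply/seteqP; split => // r _; exists (fun _ => r).
  move=> N' hN'.
  exists [set f : Y X | N' (f i)].
    exists ([:: i], fun a => if a == i then N' else setT).
      move=> a /=; case: eqP => [->//|_]; exact: filterT.
    by move=> f /= /(_ i); rewrite inE eqxx => /(_ isT).
  apply/seteqP; split => r; first by move=> [f ? <-].
  by move=> hr; exists (fun _ => r).
move=> /(_ N) h /h [[A W] /= hW sub].
by exists A, W.
Qed.


Lemma Y_hausdorff (X : choiceType) : hausdorff_space (Y X).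
Proof. exact: (@hausdorff_product (alphaX X) (fun _ => alphaX X) (fun _ => @alphaX_hausdorff X)). Qed.

Lemma Y_compact (X : choiceType) : compact [set: Y X].
Proof.
have := @tychonoff (alphaX X) (fun _ => alphaX X) (fun _ => setT)
  (fun _ => @one_point_compactification_compact _).
by congr compact; apply/seteqP; split.
Qed.

HB.instance Definition _ (X : choiceType) :=
  isPointed.Build (Y X) (fun _ => None).

Lemma Y_cover (X : choiceType) : cover_compact [set: Y X].
Proof. by rewrite -compact_cover; exact: Y_compact. Qed.


Lemma Vf_nbhs (X : choiceType) (o : alphaX X) K : nbhs o (Vf o K).
Proof. by case: o => [u|]; [exact: nbhs_Some1|exact: nbhs_VN]. Qed.

Lemma nbhs_pair (X : choiceType) (y : Y X) (D : set (Y X * Y X)) :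
  nbhs (y, y) D -> exists2 P, nbhs y P & (forall f f', P f -> P f' -> D (f, f')).
Proof.
case=> -[P Q] /= [yP yQ] sub.
exists (P `&` Q); first exact: filterI.
by move=> f f' [Pf _] [_ Qf']; apply: sub.
Qed.

Lemma pair_nbhs (X : choiceType) (y : Y X) (D : set (Y X * Y X)) P :
  nbhs y P -> (forall f f', P f -> P f' -> D (f, f')) -> nbhs (y, y) D.
Proof.
move=> yP sub; exists (P, P) => //= -[f f'] [/= Pf Pf']; exact: sub.
Qed.

Definition relO (X : eqType) (B : seq X) : set (option X * option X) :=
  [set q | q.1 = q.2 \/ (VN B q.1 /\ VN B q.2)].

Lemma Tf_sub_j (X : choiceType) (G : set (X -> X)) (E : set (elt G * elt G)) :
  Tf G E -> exists2 D, diag_nbhs (Y X) D &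
     [set p | D (jmap G p.1, jmap G p.2)] `<=` E.
Proof.
case=> A [B hB].
exists [set q : Y X * Y X | forall x, x \in A -> relO B (q.1 (Some x), q.2 (Some x))].
  move=> y; apply: (@pair_nbhs _ y _ (basic (map Some A) (fun a => Vf (y a) B))).
    by apply: basic_nbhs => a _; exact: Vf_nbhs.
  move=> f f' Pf Pf' x xA /=.
  have Sx : Some x \in map Some A by rewrite mem_map //; exact: Some_inj.
  move: (Pf _ Sx) (Pf' _ Sx); case: (y (Some x)) => [u|] /=.
    by move=> -> ->; left.
  by move=> h1 h2; right.
move=> [g h] /= hD; apply: hB => x xA /=.
case: (hD x xA) => /= [[->]|[]]; first by left.
by rewrite /VN => ? ?; right.
Qed.

Lemma j_sub_Tf (X : choiceType) (G : set (X -> X)) (E : set (elt G * elt G)) :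
  (exists2 D, diag_nbhs (Y X) D &
     [set p | D (jmap G p.1, jmap G p.2)] `<=` E) -> Tf G E.
Proof.
case=> D hD sub.
have step : forall y : Y X, exists p : seq (alphaX X) * (alphaX X -> seq X),
   (forall f f', basic p.1 (fun a => Vf (y a) (p.2 a)) f ->
       basic p.1 (fun a => Vf (y a) (p.2 a)) f' -> D (f, f')).
  move=> y; have [P yP PD] := nbhs_pair (hD y).
  have [A [W [hW sW]]] := nbhs_basic yP.
  have hK : forall a, exists K : seq X, Vf (y a) K `<=` W a.
    move=> a; have := hW a; case: (y a) => [u|] /= h.
      by exists [::] => r ->; exact: nbhs_singleton h.
    exact: nbhs_NoneE.
  have [Kf hKf] := choice hK.
  exists (A, Kf) => f f' Of Of'; apply: PD; apply: sW => a aA; apply: hKf.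
    exact: Of.
  exact: Of'.
have [F hF] := choice step.
pose O y := basic (F y).1 (fun a => Vf (y a) ((F y).2 a)).
have Oopen y : open (O y).
  rewrite openE => f Of; apply: basic_nbhs => a aA.
  apply: open_nbhs_nbhs; split; [exact: Vf_open|exact: Of].
have yO y : O y y.
  by move=> a _; case: (y a) => [u|] //=.
have covT : [set: Y X] `<=` cover [set: Y X] O.
  by move=> y _; exists y => //; exact: yO.
have [D' _ cov] := @Y_cover X _ setT O (fun y _ => Oopen y) covT.
pose xs := flatten [seq pmap id (F y).1 | y <- finmap.enum_fset D'].
pose B := flatten [seq flatten [seq (if y a is Some u then [:: u] else [::]) ++ (F y).2 a
           | a <- (F y).1] | y <- finmap.enum_fset D'].
have inB1 y a u : y \in finmap.enum_fset D' -> a \in (F y).1 -> y a = Some u -> u \in B.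
  move=> yD aF e; apply/flatten_mapP; exists y => //; apply/flatten_mapP.
  by exists a => //; rewrite e mem_cat inE eqxx.
have inB2 y a v : y \in finmap.enum_fset D' -> a \in (F y).1 -> v \in (F y).2 a -> v \in B.
  move=> yD aF vK; apply/flatten_mapP; exists y => //; apply/flatten_mapP.
  by exists a => //; rewrite mem_cat vK orbT.
exists xs, B => -[g h] /= T; apply: sub => /=.
have [y yD Ojg] := cov (jmap G g) I.
apply: (hF y) => // a aA.
case: a aA => [x|] aA; last exact: (Ojg None aA).
have xxs : x \in xs.
  by apply/flatten_mapP; exists y => //; rewrite mem_pmap map_id.
have := T x xxs; have := Ojg _ aA; rewrite /jmap /=.
move=> Og [/= e|[/= gB hB']]; first by rewrite -e.
move: Og; case Ey: (y (Some x)) => [u|] /=.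
  move=> [gu]; exfalso; move: gB; rewrite gu.
  by rewrite (inB1 _ _ _ yD aA Ey).
move=> _; apply/negP => /(inB2 _ _ _ yD aA).
by rewrite (negbTE hB').
Qed.


Lemma alphaX_completion (X : choiceType) (G : set (X -> X))
  (HG : is_perm_subgroup G) (HU : ultratransitive G) (Xinf : infinite_set [set: X]) :
  is_compact_completion (UX G) [set: alphaX X] (Some : X -> alphaX X).
Proof.
split.
- exact: alphaX_hausdorff.
- exact: one_point_compactification_compact.
- apply/seteqP; split => // -[x|] _ B nB.
    by exists (Some x); split; [exists x|exact: nbhs_singleton nB].
  have [K KB] := nbhs_NoneE nB.
  have [y yK] := exists_notin Xinf K.
  by exists (Some y); split; [exists y|apply: KB].
rewrite (UX_E HG HU); apply/seteqP; split => E.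
- case=> B hB; exists (relO B).
    move=> o; exists (Vf o B, Vf o B); first by split; exact: Vf_nbhs.
    case=> r r' /= [].
    by case: o => [u|] /= => [-> ->|h1 h2]; [left|right].
  move=> [a b] /= [[->]|[/= h1 h2]]; apply: hB; first by left.
  by right.
- case=> D hD sub.
  have [[P Q] /= [nP nQ] PQ] := hD None.
  have [K1 hK1] := nbhs_NoneE nP.
  have [K2 hK2] := nbhs_NoneE nQ.
  exists (K1 ++ K2) => -[a b] /= [/= ->|[]].
    by apply: sub; exact: (nbhs_singleton (hD (Some b))).
  rewrite !mem_cat !negb_or => /andP[aK1 _] /andP[_ bK2].
  by apply: sub => /=; apply: PQ; split; [apply: hK1|apply: hK2].
Qed.

Lemma Sym_perm (X : Type) : is_perm_subgroup (Sym X).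
Proof.
split => //.
- by exists id.
- move=> g h [gi ggi gig] [hi hhi hih]; exists (hi \o gi) => x /=.
    by rewrite ggi hhi.
  by rewrite hih gig.
- by move=> g [gi ggi gig]; exists gi; [exists g|].
Qed.

Lemma Sym_ut (X : eqType) (G : set (X -> X)) :
  is_perm_subgroup G -> ultratransitive G -> ultratransitive (Sym X).
Proof.
case=> sub _ _ _ HU xs ys s u1 u2; have [g Gg e] := HU xs ys s u1 u2.
by exists g => //; apply: sub.
Qed.

Lemma glb_unique (T : Type) (W1 W2 L R : set_system (T * T)) :
  is_glb W1 L R -> is_glb W2 L R -> W1 = W2.
Proof.
case=> u1 l1 r1 g1 [u2 l2 r2 g2]; apply/seteqP; split.
  exact: g2.
exact: g1.
Qed.

Lemma j_char (X : choiceType) (G : set (X -> X)) :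
  Tf G = [set E | exists2 D, diag_nbhs (Y X) D &
                    [set p | D (jmap G p.1, jmap G p.2)] `<=` E].
Proof.
apply/seteqP; split => E; first exact: Tf_sub_j.
exact: j_sub_Tf.
Qed.

Lemma density (X : choiceType) (G : set (X -> X)) :
  is_perm_subgroup G -> ultratransitive G ->
  closure (range (jmap G)) = closure (range (jmap (Sym X))).
Proof.
move=> HG HU; have [subG _ _ _] := HG.
apply/seteqP; split.
  apply: closureS => _ [g _ <-].
  by exists (exist _ (proj1_sig g) (subG _ (proj2_sig g))).
suff sub : range (jmap (Sym X)) `<=` closure (range (jmap G)).
  rewrite [X in _ `<=` X](closure_id _).1; first exact: closureS.
  exact: closed_closure.
move=> _ [s _ <-] B nB.
have [A [W [hW sW]]] := nbhs_basic nB.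
pose xs := undup (pmap id A).
have sinj : injective (proj1_sig s) by apply: bij_inj; exact: (proj2_sig s).
have [g Gg e] := HU xs (map (proj1_sig s) xs) (esym (size_map _ _)) (undup_uniq _)
  ltac:(by rewrite (map_inj_uniq sinj) undup_uniq).
exists (jmap G (exist _ g Gg)); split; first by exists (exist _ g Gg).
apply: sW => -[x|] aA; last exact: (nbhs_singleton (hW None)).
have xxs : x \in xs by rewrite mem_undup mem_pmap map_id.
have gx : g x = proj1_sig s x by move: e => /eq_in_map /(_ x xxs).
rewrite /jmap /= gx; exact: (nbhs_singleton (hW (Some x))).
Qed.


Unset Implicit Arguments.
Set Strict Implicit.
Local Close Scope relation_scope.

Theorem corollary4p2 (X : choiceType) (G : set (X -> X)) :
  infinite_set [set: X] -> is_perm_subgroup G -> ultratransitive G ->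
  [/\ totally_bounded_unif (UX G),
      is_compact_completion (UX G) [set: alphaX X] (Some : X -> alphaX X),
      is_glb (Ucov G) (leftU G) (rightU G),
      roelcke_precompact G &
      (forall W, is_glb W (leftU G) (rightU G) ->
         is_compact_completion W (closure (range (jmap G))) (jmap G))
      /\
      (forall W, is_glb W (leftU (Sym X)) (rightU (Sym X)) ->
         is_compact_completion W (closure (range (jmap G)))
                                 (jmap (Sym X)))].
Proof.
move=> Xinf HG HU.
have HS := Sym_perm X.
have HUS := Sym_ut HG HU.
split.
- exact: UX_tb.
- exact: alphaX_completion.
- by rewrite (Ucov_E HG HU); exact: Tf_glb.
- by exists (Tf G); split; [exact: Tf_glb|exact: Tf_tb].
split.
- move=> W hW; rewrite (glb_unique hW (Tf_glb HG HU)).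
  split; [exact: Y_hausdorff|exact: Y_compact|by []|exact: j_char].
- move=> W hW; rewrite (glb_unique hW (Tf_glb HS HUS)).
  split; [exact: Y_hausdorff|exact: Y_compact|exact: density|exact: j_char].
Qed.
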